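(* Let $R$ be a schematic semi-graded ring and $J$ a compatible semi-graded ideal of $R$. If $E$ is an LSG $R$-module that is $T$-closed in $\mathsf{LSG}\text{-}R$, then $f^!(E)$ (the largest SG $R$-submodule of $E$ annihilated by $J$, viewed as an $R/J$-module) is an LSG $R/J$-module that is $T$-closed in $\mathsf{LSG}\text{-}R/J$.
   Context: Rings are associative with $1$; modules are left modules. A ring $R$ is semi-graded (SG) if there are additive subgroups $R_n$ ($n\in\mathbb{Z}$) with $R=\bigoplus_n R_n$, $R_mR_n\subseteq\bigoplus_{k\le m+n}R_k$, and $1\in R_0$; positively SG if $R_n=0$ for $n<0$. An $R$-module $M$ is SG if $M=\bigoplus_nM_n$ with $R_mM_n\subseteq\bigoplus_{k\le m+n}M_k$ for $m\ge0$; homomorphisms are homogeneous if they preserve degrees; SG submodules are submodules $N$ with $N=\bigoplus(N\cap M_n)$. An SG ideal $J$ is a two-sided ideal that is an SG submodule of $R$; $R/J$ is SG with $(R/J)_n=(R_n+J)/J$. $f^!(E)$ is an SG $R/J$-module via $\overline r m=rm$, with $f^!(E)_n=f^!(E)\cap E_n$. Let $R'_n=\{r\in R_n: rh\in R_{n+m}\ \forall m,\forall h\in R_m\}$, $R''_n=\{r\in R'_n: hr\in R_{n+m}\ \forall m,\forall h\in R_m\}$, $R'=\bigcup R'_n$, $R''=\bigcup R''_n$, similarly for $R/J$. $M$ is LSG if $R'_nM_m\subseteq M_{n+m}$; $\mathsf{LSG}\text{-}R$ is the category of LSG modules with homogeneous homomorphisms. $J$ is compatible if the image of $R'$ in $R/J$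 is $(R/J)'$. A left Ore set $S$ is good if $S\subseteq R''$ and for $s\in S,r\in R'$ there are $u\in R'$, $v\in S$ with $us=vr$. $R_{\ge t}$ is the intersection of all SG ideals containing $\bigoplus_{k\ge t}R_k$ (likewise $(R/J)_{\ge t}$). $m\in M$ is torsion if $(R_{\ge t})^nm=0$ for some $n,t\ge0$; $M$ is torsion if all its elements are. $R$ is schematic if it is positively SG, left Noetherian, and there is a finite set $I$ of good left Ore sets $S$ with $S\cap\bigoplus_{k\ge1}R_k\ne\emptyset$ such that for each $(x_S)\in\prod_{S\in I}S$ there are $t,m$ with $(R_{\ge t})^m\subseteq\sum_SRx_S$. An object $E$ of $\mathsf{LSG}\text{-}R$ is $T$-closed if for every object $M$, every SG submodule $N$ with $M/N$ torsion, every morphism $N\to E$ extends uniquely to a morphism $M\to E$ (equivalently $E$ is torsion-free and has the extension property); the same definition applies over $R/J$ with $(R/J)_{\ge t}$. *)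

(* Defs.v *)
From HB Require Import structures.
From mathcomp Require Import all_boot all_order all_algebra.
From Stdlib Require Import ClassicalEpsilon.
Set Implicit Arguments.
Unset Strict Implicit.
Unset Printing Implicit Defensive.
Import Order.TTheory GRing.Theory Num.Theory.
Local Open Scope ring_scope.

Definition sum_of (V : zmodType) (G : int -> V -> Prop) (P : int -> Prop)
  (v : V) : Prop :=
  exists (s : seq int) (f : int -> V),
    (forall n, n \in s -> P n /\ G n (f n)) /\ v = \sum_(n <- s) f n.

Definition is_dsum (V : zmodType) (D : V -> Prop) (G : int -> V -> Prop) : Prop :=
  [/\ forall n v, G n v -> D v,
      forall n, [/\ G n 0, forall v w, G n v -> G n w -> G n (v + w)
                 & forall v, G n v -> G n (- v)],
      forall v, D v -> sum_of G (fun _ => True) v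
    & forall (s : seq int) (f : int -> V), uniq s ->
        (forall n, n \in s -> G n (f n)) -> \sum_(n <- s) f n = 0 ->
        forall n, n \in s -> f n = 0].

Section Rings.
Variable A : pzRingType.
Variable Ag : int -> A -> Prop.

Definition is_SG_ring : Prop :=
  [/\ is_dsum (fun _ => True) Ag,
      forall m n a b, Ag m a -> Ag n b -> sum_of Ag (fun k => k <= m + n) (a * b)
    & Ag 0 1].

Definition is_pos_SG_ring : Prop :=
  is_SG_ring /\ forall n a, n < 0 -> Ag n a -> a = 0.

Definition primeR (n : int) (a : A) : Prop :=
  Ag n a /\ forall m h, Ag m h -> Ag (n + m) (a * h).
Definition dprimeR (n : int) (a : A) : Prop :=
  primeR n a /\ forall m h, Ag m h -> Ag (n + m) (h * a).
Definition Rp (a : A) : Prop := exists n, primeR n a.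
Definition Rpp (a : A) : Prop := exists n, dprimeR n a.

Definition is_ideal (I : A -> Prop) : Prop :=
  [/\ I 0, forall x y, I x -> I y -> I (x + y), forall x, I x -> I (- x),
      forall a x, I x -> I (a * x) & forall a x, I x -> I (x * a)].

Definition is_left_ideal (I : A -> Prop) : Prop :=
  [/\ I 0, forall x y, I x -> I y -> I (x + y), forall x, I x -> I (- x)
    & forall a x, I x -> I (a * x)].

Definition SG_ideal (I : A -> Prop) : Prop :=
  is_ideal I /\
  forall x, I x -> sum_of (fun n y => Ag n y /\ I y) (fun _ => True) x.

Definition Rge (t : int) (a : A) : Prop :=
  forall I, SG_ideal I -> (forall x, sum_of Ag (fun k => t <= k) x -> I x) -> I a.

Definition prodset (I K : A -> Prop) (a : A) : Prop :=
  exists s : seq (A * A), (forall p, p \in s -> I p.1 /\ K p.2) /\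
    a = \sum_(p <- s) p.1 * p.2.

Fixpoint idpow (I : A -> Prop) (n : nat) : A -> Prop :=
  match n with
  | 0 => fun _ => True
  | n'.+1 => prodset I (idpow I n')
  end.

Definition left_noetherian : Prop :=
  forall I, is_left_ideal I -> exists g : seq A,
    forall a, I a <-> exists c : nat -> A, a = \sum_(i < size g) c i * g`_i.

Definition is_left_ore (S : A -> Prop) : Prop :=
  [/\ S 1, forall a b, S a -> S b -> S (a * b)
    & forall s r, S s -> exists s' r', S s' /\ s' * r = r' * s].

Definition good_ore (S : A -> Prop) : Prop :=
  [/\ is_left_ore S, forall s, S s -> Rpp s
    & forall s r, S s -> Rp r -> exists u v, [/\ Rp u, S v & u * s = v * r]].

Definition schematic : Prop :=
  [/\ is_pos_SG_ring, left_noetherian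
    & exists Ss : seq (A -> Prop),
        (forall i, (i < size Ss)%N ->
           good_ore (nth (fun _ => False) Ss i) /\
           exists s, nth (fun _ => False) Ss i s /\ sum_of Ag (fun k => 1 <= k) s) /\
        forall x : nat -> A, (forall i, (i < size Ss)%N -> nth (fun _ => False) Ss i (x i)) ->
          exists t m : nat, forall a, idpow (Rge t%:Z) m a ->
            exists c : nat -> A, a = \sum_(i < size Ss) c i * x i].
End Rings.

(* Modules presented as a subset of an abelian group with an action    *)
Record lobj (A : pzRingType) := LObj {
  lcar : zmodType;
  ldom : lcar -> Prop;
  lact : A -> lcar -> lcar;
  lgr  : int -> lcar -> Prop }.
Arguments LObj {A}.
Arguments lcar {A}.
Arguments ldom {A} l _.
Arguments lact {A} l _ _.
Arguments lgr {A} l _ _.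

Section Modules.
Unset Implicit Arguments.
Variable A : pzRingType.
Variable Ag : int -> A -> Prop.

Definition is_lmod (X : lobj A) : Prop :=
  [/\ ldom X 0,
      forall x y, ldom X x -> ldom X y -> ldom X (x + y),
      forall x, ldom X x -> ldom X (- x),
      forall a x, ldom X x -> ldom X (lact X a x)
    & [/\ forall a b x, ldom X x -> lact X (a + b) x = lact X a x + lact X b x,
          forall a x y, ldom X x -> ldom X y -> lact X a (x + y) = lact X a x + lact X a y,
          forall a b x, ldom X x -> lact X (a * b) x = lact X a (lact X b x)
        & forall x, ldom X x -> lact X 1 x = x]].

Definition is_SG_mod (X : lobj A) : Prop :=
  [/\ is_lmod X, is_dsum (ldom X) (lgr X)
    & forall m n a x, 0 <= m -> Ag m a -> lgr X n x ->
        sum_of (lgr X) (fun k => k <= m + n) (lact X a x)].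

Definition is_LSG (X : lobj A) : Prop :=
  is_SG_mod X /\
  forall n m a x, primeR Ag n a -> lgr X m x -> lgr X (n + m) (lact X a x).

Definition SG_submod (X : lobj A) (N : lcar X -> Prop) : Prop :=
  [/\ forall x, N x -> ldom X x, N 0,
      forall x y, N x -> N y -> N (x + y) /\ forall x, N x -> N (- x),
      forall a x, N x -> N (lact X a x)
    & forall x, N x -> sum_of (fun n y => lgr X n y /\ N y) (fun _ => True) x].

Definition quot_torsion (X : lobj A) (N : lcar X -> Prop) : Prop :=
  forall x, ldom X x -> exists t n : nat,
    forall a, idpow (Rge Ag t%:Z) n a -> N (lact X a x).

Definition morph (X : lobj A) (N : lcar X -> Prop) (Y : lobj A)
  (g : lcar X -> lcar Y) : Prop :=
  [/\ forall x, N x -> ldom Y (g x),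
      forall x y, N x -> N y -> g (x + y) = g x + g y,
      forall a x, N x -> g (lact X a x) = lact Y a (g x)
    & forall n x, N x -> lgr X n x -> lgr Y n (g x)].

Definition T_closed (E : lobj A) : Prop :=
  forall M : lobj A, (forall x, ldom M x) -> is_LSG M ->
  forall N, SG_submod M N -> quot_torsion M N ->
  forall g, morph M N E g ->
    (exists h, morph M (ldom M) E h /\ forall x, N x -> h x = g x) /\
    (forall h1 h2, morph M (ldom M) E h1 -> morph M (ldom M) E h2 ->
       (forall x, N x -> h1 x = g x) -> (forall x, N x -> h2 x = g x) ->
       forall x, ldom M x -> h1 x = h2 x).
End Modules.
Set Implicit Arguments.
Arguments is_lmod {A} X.
Arguments is_SG_mod {A} Ag X.
Arguments is_LSG {A} Ag X.
Arguments SG_submod {A} X N.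
Arguments quot_torsion {A} Ag X N.
Arguments morph {A} X N Y g.
Arguments T_closed {A} Ag E.

(* Quotient ring R/J (given as a surjection pi : R -> Q with kernel J) *)
(* (R/J)_n = (R_n + J)/J = pi(R_n) *)
Definition quot_gr (R Q : pzRingType) (Rg : int -> R -> Prop)
  (pi : {rmorphism R -> Q}) (n : int) (q : Q) : Prop :=
  exists r, Rg n r /\ pi r = q.

Definition compatible (R Q : pzRingType) (Rg : int -> R -> Prop)
  (pi : {rmorphism R -> Q}) : Prop :=
  forall q, Rp (quot_gr Rg pi) q <-> exists r, Rp Rg r /\ pi r = q.

Definition sec (R Q : pzRingType) (pi : {rmorphism R -> Q}) (q : Q) : R :=
  epsilon (inhabits 0) (fun r => pi r = q).

Definition fshriek_dom (R : pzRingType) (J : R -> Prop) (E : lobj R)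
  (x : lcar E) : Prop :=
  exists N, SG_submod E N /\ (forall j y, J j -> N y -> lact E j y = 0) /\ N x.

Arguments fshriek_dom {R} J E x.

Definition fshriek (R Q : pzRingType) (J : R -> Prop)
  (pi : {rmorphism R -> Q}) (E : lobj R) : lobj Q :=
  LObj (lcar E) (fshriek_dom J E) (fun q x => lact E (sec pi q) x)
       (fun n x => fshriek_dom J E x /\ lgr E n x).

(* Main.v *)
Require Import Defs.
From HB Require Import structures.
From mathcomp Require Import all_boot all_order all_algebra.
From Stdlib Require Import ClassicalEpsilon.
Set Implicit Arguments. Unset Strict Implicit. Unset Printing Implicit Defensive.
Import GRing.Theory.
Local Open Scope ring_scope.

Definition dcomp (V : zmodType) (s : seq int) (f : int -> V) k := f k *+ count_mem k s.

Lemma sum_comp (V : zmodType) (s t : seq int) (f : int -> V) :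
  uniq t -> {subset s <= t} -> \sum_(n <- s) f n = \sum_(n <- t) dcomp s f n.
Proof.
move=> Ut; elim: s => [|x s IH] Sst.
  by rewrite big_nil big1 // => k _; rewrite /dcomp /= mulr0n.
rewrite big_cons IH; last by move=> y ys; apply: Sst; rewrite inE ys orbT.
rewrite /dcomp /=.
under [X in _ = X]eq_bigr => k _ do rewrite mulrnDr.
rewrite big_split /=; congr (_ + _).
rewrite (bigD1_seq x) //=; last by apply: Sst; rewrite inE eqxx.
rewrite eqxx mulr1n big1 ?addr0 // => i; rewrite eq_sym => /negbTE ->; by rewrite mulr0n.
Qed.

Lemma comp_out (V : zmodType) (s : seq int) (f : int -> V) k :
  k \notin s -> dcomp s f k = 0.
Proof. by move=> /count_memPn H; rewrite /dcomp H mulr0n. Qed.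

Lemma comp_closed (V : zmodType) (P : V -> Prop) (s : seq int) (f : int -> V) k :
  P 0 -> (forall v w, P v -> P w -> P (v + w)) -> (k \in s -> P (f k)) -> P (dcomp s f k).
Proof.
move=> P0 PD Pk; rewrite /dcomp.
case: (boolP (k \in s)) => ks; last by move/count_memPn: ks => ->; rewrite mulr0n.
elim: (count_mem k s) => [|c IH]; first by rewrite mulr0n.
by rewrite mulrS; apply: PD => //; apply: Pk.
Qed.

Lemma comp_eq (V : zmodType) (D : V -> Prop) (G : int -> V -> Prop) :
  is_dsum D G ->
  forall s1 f1 s2 f2, (forall n, n \in s1 -> G n (f1 n)) -> (forall n, n \in s2 -> G n (f2 n)) ->
  \sum_(n <- s1) f1 n = \sum_(n <- s2) f2 n -> forall k, dcomp s1 f1 k = dcomp s2 f2 k.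
Proof.
case=> _ Hcl _ Hind s1 f1 s2 f2 H1 H2 Heq k.
pose t := undup (s1 ++ s2).
have Ut : uniq t by apply: undup_uniq.
have S1 : {subset s1 <= t} by move=> y ys; rewrite mem_undup mem_cat ys.
have S2 : {subset s2 <= t} by move=> y ys; rewrite mem_undup mem_cat ys orbT.
case: (boolP (k \in t)) => kt; last first.
  rewrite !comp_out //; apply: contra kt; [exact: S2|exact: S1].
apply/eqP; rewrite -subr_eq0; apply/eqP.
apply: (Hind t (fun k => dcomp s1 f1 k - dcomp s2 f2 k)) => //.
- move=> n _; have [G0 GD GN] := Hcl n; apply: (GD).
    by apply: (comp_closed (P := G n)) => //; exact: H1.
  by apply: (GN); apply: (comp_closed (P := G n)) => //; exact: H2.
- by rewrite sumrB -sum_comp // -sum_comp // Heq subrr.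
Qed.

Lemma sum_of_mono (V : zmodType) (G G' : int -> V -> Prop) (P P' : int -> Prop) v :
  (forall n w, P n -> G n w -> P' n /\ G' n w) -> sum_of G P v -> sum_of G' P' v.
Proof.
move=> H [s [f [Hs ->]]]; exists s, f; split => // n ns.
by have [Pn Gn] := Hs n ns; apply: H.
Qed.

Lemma sec_spec (R Q : pzRingType) (pi : {rmorphism R -> Q}) q :
  (forall q : Q, exists r : R, pi r = q) -> pi (sec pi q) = q.
Proof. by move=> surj; rewrite /sec; exact: (epsilon_spec _ (fun r => pi r = q) (surj q)). Qed.

Lemma lact0r (R : pzRingType) (E : lobj R) a : is_lmod E -> lact E a 0 = 0.
Proof.
case=> E0 _ _ _ [_ Hd _ _].
by apply: (@addrI _ (lact E a 0)); rewrite -Hd // !addr0.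
Qed.

Lemma lactr0 (R : pzRingType) (E : lobj R) x : is_lmod E -> ldom E x -> lact E 0 x = 0.
Proof.
case=> E0 _ _ _ [Hd _ _ _] Ex.
by apply: (@addrI _ (lact E 0 x)); rewrite -Hd // !addr0.
Qed.

Lemma SGs_add (R : pzRingType) (E : lobj R) N x y : SG_submod E N -> N x -> N y -> N (x + y).
Proof. by case=> _ _ H _ _ Nx Ny; have [] := H x y Nx Ny. Qed.
Lemma SGs_opp (R : pzRingType) (E : lobj R) N x : SG_submod E N -> N x -> N (- x).
Proof. by case=> _ _ H _ _ Nx; have [_ ] := H x x Nx Nx; apply. Qed.
Lemma SGs_0 (R : pzRingType) (E : lobj R) N : SG_submod E N -> N 0.
Proof. by case. Qed.

Definition annih (R : pzRingType) (J : R -> Prop) (E : lobj R) (N : lcar E -> Prop) :=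
  forall j y, J j -> N y -> lact E j y = 0.
Arguments annih {R} J E N.

Lemma D_add (R : pzRingType) (J : R -> Prop) (E : lobj R) x y :
  is_lmod E -> is_dsum (ldom E) (lgr E) ->
  fshriek_dom J E x -> fshriek_dom J E y -> fshriek_dom J E (x + y).
Proof.
move=> HE Hds [N1 [S1 [A1 N1x]]] [N2 [S2 [A2 N2y]]].
have [E0 Ed _ _ [Hl1 Hl2 _ _]] := HE.
have [_ Hcl _ _] := Hds.
pose N3 z := exists a b, [/\ N1 a, N2 b & z = a + b].
exists N3; split; last split; last by exists x, y.
- split.
  + move=> z [a [b [Na Nb ->]]]; apply: Ed; [case: S1 => + _ _ _ _; apply|case: S2 => + _ _ _ _; apply] => //.
  + by exists 0, 0; rewrite addr0; split => //; apply: SGs_0; eauto.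
  + move=> z w [a [b [Na Nb ->]]] [a' [b' [Na' Nb' ->]]]; split.
      exists (a + a'), (b + b'); split; [exact: SGs_add S1 _ _|exact: SGs_add S2 _ _|].
      by rewrite addrACA.
    move=> z' [a1 [b1 [Na1 Nb1 ->]]]; exists (- a1), (- b1); split; [exact: SGs_opp S1 _|exact: SGs_opp S2 _|].
    by rewrite opprD.
  + move=> r z [a [b [Na Nb ->]]]; exists (lact E r a), (lact E r b); split.
    * by case: S1 => _ _ _ + _; apply.
    * by case: S2 => _ _ _ + _; apply.
    * apply: Hl2; [case: S1 => + _ _ _ _; apply|case: S2 => + _ _ _ _; apply] => //.
  + move=> z [a [b [Na Nb ->]]].
    have [s1 [f1 [H1 ->]]] : sum_of (fun n y => lgr E n y /\ N1 y) (fun _ => True) a by case: S1 => _ _ _ _; apply.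
    have [s2 [f2 [H2 ->]]] : sum_of (fun n y => lgr E n y /\ N2 y) (fun _ => True) b by case: S2 => _ _ _ _; apply.
    pose t := undup (s1 ++ s2).
    exists t, (fun k => dcomp s1 f1 k + dcomp s2 f2 k); split.
    * move=> n _; have [G0 GD _] := Hcl n; split => //; split.
      - apply: (GD).
          by apply: (comp_closed (P := lgr E n)) => // /H1 [_ []].
        by apply: (comp_closed (P := lgr E n)) => // /H2 [_ []].
      - exists (dcomp s1 f1 n), (dcomp s2 f2 n); split => //.
        + apply: (comp_closed (P := N1)); [exact: SGs_0 S1|by move=> *; apply: SGs_add S1 _ _|by move=> /H1 [_ []]].
        + apply: (comp_closed (P := N2)); [exact: SGs_0 S2|by move=> *; apply: SGs_add S2 _ _|by move=> /H2 [_ []]].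
    * have T1 : {subset s1 <= t} by move=> k ks; rewrite mem_undup mem_cat ks.
      have T2 : {subset s2 <= t} by move=> k ks; rewrite mem_undup mem_cat ks orbT.
      by rewrite big_split /= -(sum_comp f1 (undup_uniq _) T1) -(sum_comp f2 (undup_uniq _) T2).
- move=> j z Jj [a [b [Na Nb ->]]]; rewrite Hl2.
  + by rewrite (A1 j a Jj Na) (A2 j b Jj Nb) addr0.
  + by case: S1 => + _ _ _ _; apply.
  + by case: S2 => + _ _ _ _; apply.
Qed.

Lemma D_SG (R : pzRingType) (J : R -> Prop) (E : lobj R) :
  is_lmod E -> is_dsum (ldom E) (lgr E) ->
  SG_submod E (fshriek_dom J E) /\ annih J E (fshriek_dom J E).
Proof.
move=> HE Hds; have [E0 Ed En Ea _] := HE.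
split; last by move=> j y Jj [N [_ [AN Ny]]]; apply: AN.
split.
- by move=> x [N [[Hd _ _ _ _] [_ Nx]]]; apply: Hd.
- exists (fun x => x = 0); split; last split => //.
  + split => //.
    * by move=> x ->.
    * by move=> x y -> ->; rewrite addr0; split => // z ->; rewrite oppr0.
    * by move=> a x ->; apply: lact0r.
    * by move=> x ->; exists [::], (fun _ => 0); split => //; rewrite big_nil.
  + by move=> j y _ ->; apply: lact0r.
- move=> x y Dx Dy; split; first exact: D_add.
  by move=> z [N [SN [AN Nz]]]; exists N; split => //; split => //; apply: SGs_opp SN _.
- by move=> a x [N [SN [AN Nx]]]; exists N; split => //; split => //; case: SN => _ _ _ + _; apply.
- move=> x [N [SN [AN Nx]]].
  have := (match SN with And5 _ _ _ _ H => H end) x Nx.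
  apply: sum_of_mono => n w _ [Gw Nw]; split => //; split => //; by exists N.
Qed.

Lemma lact_pi (R Q : pzRingType) (J : R -> Prop) (pi : {rmorphism R -> Q}) (E : lobj R) x r1 r2 :
  is_lmod E -> is_dsum (ldom E) (lgr E) -> (forall r, pi r = 0 <-> J r) ->
  fshriek_dom J E x -> pi r1 = pi r2 -> lact E r1 x = lact E r2 x.
Proof.
move=> HE Hds Hker Dx Hpi.
have [[Hdom _ _ _ _] AN] := D_SG J HE Hds.
have Jd : J (r1 - r2) by apply/Hker; rewrite rmorphB Hpi subrr.
have -> : r1 = r2 + (r1 - r2) by rewrite addrC subrK.
case: HE => _ _ _ _ [Hl1 _ _ _].
by rewrite Hl1 ?(AN _ _ Jd Dx) ?addr0 //; apply: Hdom.
Qed.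

Lemma hom_J (R : pzRingType) (Rg : int -> R -> Prop) (J : R -> Prop) n n' r0 r :
  is_dsum (fun _ => True) Rg -> SG_ideal Rg J -> Rg n r0 -> Rg n' r -> n != n' ->
  J (r - r0) -> J r.
Proof.
move=> Hds [[J0 JD JN _ _] JSG] Hr0 Hr nn' Jd.
have [s [f [Hf Hsum]]] := JSG _ Jd.
pose g k := if k == n' then r else - r0.
have Hg : forall k, k \in [:: n'; n] -> Rg k (g k).
  move=> k; rewrite !inE /g => /orP [/eqP ->|/eqP ->]; first by rewrite eqxx.
  rewrite (negbTE nn'); by have [_ _ ] := (match Hds with And4 _ H _ _ => H end) n; apply.
have Hs2 : \sum_(k <- [:: n'; n]) g k = \sum_(k <- s) f k.
  by rewrite -Hsum !big_cons big_nil /g eqxx (negbTE nn') addr0.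
have := comp_eq Hds Hg (fun k ks => proj1 (proj2 (Hf k ks))) Hs2 n'.
rewrite /dcomp /g /= eqxx (negbTE nn') /= mulr1n => ->.
case: (boolP (n' \in s)) => [/Hf [_ [_ Jf]]|/count_memPn ->]; last by rewrite mulr0n.
elim: (count_mem n' s) => [|c IH]; first by rewrite mulr0n.
by rewrite mulrS; apply: JD.
Qed.

Lemma part1 (R Q : pzRingType) (Rg : int -> R -> Prop) (J : R -> Prop)
  (pi : {rmorphism R -> Q}) (E : lobj R) :
  is_SG_ring Rg -> SG_ideal Rg J ->
  (forall q : Q, exists r : R, pi r = q) ->
  (forall r : R, pi r = 0 <-> J r) ->
  compatible Rg pi ->
  (forall x, ldom E x) -> is_LSG Rg E ->
  is_LSG (quot_gr Rg pi) (fshriek J pi E).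
Proof.
move=> [RDs _ _] HJ surj Hker Hcomp Eall [[HE Hds HSG] HLSG].
have [SD AD] := D_SG J HE Hds.
have [Ddom D0 Dadd Dact Ddec] := SD.
have [E0 Ed En Ea [Hl1 Hl2 Hl3 Hl4]] := HE.
have Hcl := match Hds with And4 _ H _ _ => H end.
have lp := fun x r1 r2 => @lact_pi R Q J pi E x r1 r2 HE Hds Hker.
have secE := fun q => sec_spec q surj.
split; first split.
-
  split => //=.
  + by move=> x y Dx Dy; have [] := Dadd x y Dx Dy.
  + by move=> x Dx; have [_] := Dadd x x Dx Dx; apply.
  + by move=> a x Dx; apply: Dact.
  + split => /=.
    * move=> a b x Dx; rewrite -Hl1 //; apply: lp => //; by rewrite rmorphD !secE.
    * by move=> a x y Dx Dy; rewrite Hl2.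
    * move=> a b x Dx; rewrite -Hl3 //; apply: lp => //; by rewrite rmorphM !secE.
    * move=> x Dx; rewrite -[RHS]Hl4 //; apply: lp => //; by rewrite rmorph1 !secE.
-
  case: Hds => _ _ _ Hind; split => /=.
  + by move=> n v [].
  + move=> n; have [G0 GD GN] := Hcl n; split.
    * by split.
    * by move=> v w [Dv Gv] [Dw Gw]; split; [have [] := Dadd v w Dv Dw|apply: GD].
    * by move=> v [Dv Gv]; split; [have [_] := Dadd v v Dv Dv; apply|apply: GN].
  + move=> v Dv; have := Ddec v Dv; apply: sum_of_mono => n w _ [Gw Dw]; by split.
  + move=> s f Us Hf; apply: Hind => // n ns; by have [] := Hf n ns.
-
  move=> m n a x m0 [r [Rr <-]] [Dx Gx] /=.
  rewrite (lp x (sec pi (pi r)) r Dx (secE _)).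
  have [s1 [f1 [H1 Hy]]] := HSG m n r x m0 Rr Gx.
  have Dy : fshriek_dom J E (lact E r x) by apply: Dact.
  have [s2 [f2 [H2 Hy2]]] := Ddec _ Dy.
  have Heq : forall k, dcomp s1 f1 k = dcomp s2 f2 k.
    apply: (comp_eq Hds).
    - by move=> k /H1 [].
    - by move=> k /H2 [_ []].
    - by rewrite -Hy -Hy2.
  exists (undup s1), (dcomp s2 f2); split.
  + move=> k; rewrite mem_undup => ks; split; first by have [] := H1 k ks.
    have [G0 GD _] := Hcl k; split.
    * apply: (comp_closed (P := fshriek_dom J E)) => //.
      - by move=> v w Dv Dw; have [] := Dadd v w Dv Dw.
      - by move=> /H2 [_ []].
    * apply: (comp_closed (P := lgr E k)) => //.
      by move=> /H2 [_ []].
  + rewrite Hy (sum_comp f1 (undup_uniq s1)); last by move=> k; rewrite mem_undup.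
    by apply: eq_bigr => k _; apply: Heq.
-
  move=> n m a x Ha [Dx Gx] /=; split; first exact: Dact.
  have [r [[n' Hr] Era]] := (Hcomp a).1 (ex_intro _ n Ha).
  have [[r0 [Rr0 Er0]] _] := Ha.
  rewrite (lp x (sec pi a) r Dx); last by rewrite secE Era.
  case: (eqVneq n n') => [Enn|nn']; first by rewrite Enn; apply: HLSG.
  have Jr : J r.
    apply: (hom_J RDs HJ Rr0 (proj1 Hr) nn').
    by apply/Hker; rewrite rmorphB Era Er0 subrr.
  rewrite (AD r x Jr Dx); by have [] := Hcl (n + m).
Qed.

Lemma Q_dsum (R Q : pzRingType) (Rg : int -> R -> Prop) (J : R -> Prop)
  (pi : {rmorphism R -> Q}) :
  is_dsum (fun _ => True) Rg -> SG_ideal Rg J ->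
  (forall q : Q, exists r : R, pi r = q) -> (forall r : R, pi r = 0 <-> J r) ->
  is_dsum (fun _ => True) (quot_gr Rg pi).
Proof.
move=> RDs [[J0 JD _ _ _] JSG] surj Hker.
have [_ Hcl Hdec Hind] := RDs.
split => //.
- move=> n; have [G0 GD GN] := Hcl n; split.
  + by exists 0; rewrite rmorph0.
  + by move=> v w [r [Rr <-]] [r' [Rr' <-]]; exists (r + r'); rewrite rmorphD; split => //; apply: GD.
  + by move=> v [r [Rr <-]]; exists (- r); rewrite rmorphN; split => //; apply: GN.
- move=> q _; have [r <-] := surj q.
  have [s [f [Hf ->]]] := Hdec r Logic.I.
  exists s, (fun k => pi (f k)); split; last by rewrite rmorph_sum.
  by move=> n ns; split => //; exists (f n); split => //; have [] := Hf n ns.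
- move=> s fq Us Hfq Hs0 n ns.
  pose fr k := epsilon (inhabits 0) (fun r => Rg k r /\ pi r = fq k).
  have Hfr : forall k, k \in s -> Rg k (fr k) /\ pi (fr k) = fq k.
    move=> k ks; have [r Hr] := Hfq k ks.
    exact: (epsilon_spec _ (fun r => Rg k r /\ pi r = fq k) (ex_intro _ r Hr)).
  have Jsum : J (\sum_(k <- s) fr k).
    apply/Hker; rewrite rmorph_sum; rewrite -[RHS]Hs0.
    by apply: eq_big_seq => k ks; have [] := Hfr k ks.
  have [s3 [fj [Hfj Hsum]]] := JSG _ Jsum.
  have := comp_eq RDs (fun k ks => proj1 (Hfr k ks)) (fun k ks => proj1 (proj2 (Hfj k ks))) Hsum n.
  rewrite /dcomp (count_uniq_mem _ Us) ns mulr1n => Hn.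
  have [_ <-] := Hfr n ns; apply/Hker; rewrite Hn.
  case: (boolP (n \in s3)) => [/Hfj [_ [_ Jf]]|/count_memPn ->]; last by rewrite mulr0n.
  elim: (count_mem n s3) => [|c IH]; first by rewrite mulr0n.
  by rewrite mulrS; apply: JD.
Qed.

Lemma Rge_pi (R Q : pzRingType) (Rg : int -> R -> Prop) (J : R -> Prop)
  (pi : {rmorphism R -> Q}) t a :
  is_dsum (fun _ => True) Rg -> SG_ideal Rg J ->
  (forall q : Q, exists r : R, pi r = q) -> (forall r : R, pi r = 0 <-> J r) ->
  Rge Rg t a -> Rge (quot_gr Rg pi) t (pi a).
Proof.
move=> RDs HJ surj Hker Ha I [[I0 ID IN IL IR] ISG] Hge.
have QDs := Q_dsum RDs HJ surj Hker.
have [_ Hcl Hdec _] := RDs.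
apply: (Ha (fun r => I (pi r))).
- split; first split.
  + by rewrite rmorph0.
  + by move=> x y Ix Iy; rewrite rmorphD; apply: ID.
  + by move=> x Ix; rewrite rmorphN; apply: IN.
  + by move=> b x Ix; rewrite rmorphM; apply: IL.
  + by move=> b x Ix; rewrite rmorphM; apply: IR.
  + move=> x Ix.
    have [s [f [Hf Hx]]] := Hdec x Logic.I.
    have [s2 [f2 [Hf2 Hx2]]] := ISG _ Ix.
    have Heq := comp_eq QDs (s1 := s) (f1 := fun k => pi (f k))
      (fun k ks => ex_intro _ (f k) (conj (proj2 (Hf k ks)) erefl))
      (fun k ks => proj1 (proj2 (Hf2 k ks))).
    have Heq' : forall k, dcomp s (fun k => pi (f k)) k = dcomp s2 f2 k.
      by apply: Heq; rewrite -Hx2 Hx rmorph_sum.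
    exists (undup s), (dcomp s f); split.
    * move=> k _; split => //; have [G0 GD _] := Hcl k; split.
      - by apply: (comp_closed (P := Rg k)) => // /Hf [].
      - rewrite /dcomp rmorphMn -/(dcomp s (fun k => pi (f k)) k) Heq'.
        apply: (comp_closed (P := I)) => //.
        by move=> /Hf2 [_ []].
    * by rewrite Hx (sum_comp f (undup_uniq s)) // => k; rewrite mem_undup.
- move=> x [s [f [Hf ->]]]; rewrite rmorph_sum; apply: Hge.
  exists s, (fun k => pi (f k)); split => // n ns; have [Hn Rf] := Hf n ns.
  by split => //; exists (f n).
Qed.

Lemma idpow_pi (R Q : pzRingType) (Rg : int -> R -> Prop) (J : R -> Prop)
  (pi : {rmorphism R -> Q}) t n a :
  is_dsum (fun _ => True) Rg -> SG_ideal Rg J ->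
  (forall q : Q, exists r : R, pi r = q) -> (forall r : R, pi r = 0 <-> J r) ->
  idpow (Rge Rg t) n a -> idpow (Rge (quot_gr Rg pi) t) n (pi a).
Proof.
move=> RDs HJ surj Hker; elim: n a => [|n IH] a //= [s [Hs ->]].
exists (map (fun p => (pi p.1, pi p.2)) s); split.
- move=> p /mapP [p' p's ->] /=; have [H1 H2] := Hs p' p's; split.
  + exact: (Rge_pi RDs HJ surj Hker).
  + exact: IH.
- by rewrite rmorph_sum big_map; apply: eq_bigr => p _; rewrite rmorphM.
Qed.

Definition pullb (R Q : pzRingType) (pi : {rmorphism R -> Q}) (M : lobj Q) : lobj R :=
  LObj (lcar M) (ldom M) (fun r x => lact M (pi r) x) (lgr M).

Lemma pullb_LSG (R Q : pzRingType) (Rg : int -> R -> Prop) (pi : {rmorphism R -> Q}) (M : lobj Q) :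
  is_LSG (quot_gr Rg pi) M -> is_LSG Rg (pullb pi M).
Proof.
move=> [[[M0 Md Mn Ma [H1 H2 H3 H4]] Hds HSG] HL]; split; first split => //.
- split => //=.
  + by move=> a x Mx; apply: Ma.
  + split => /=.
    * by move=> a b x Mx; rewrite rmorphD H1.
    * by move=> a x y Mx My; rewrite H2.
    * by move=> a b x Mx; rewrite rmorphM H3.
    * by move=> x Mx; rewrite rmorph1 H4.
- move=> m n a x m0 Ra Gx /=; apply: HSG => //; by exists a.
- move=> n m a x [Ra Hra] Gx /=; apply: HL => //; split; first by exists a.
  move=> k h [h0 [Rh0 <-]]; exists (a * h0); rewrite rmorphM; split => //; exact: Hra.
Qed.

Lemma morph_conv (R Q : pzRingType) (J : R -> Prop) (pi : {rmorphism R -> Q}) (E : lobj R)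
  (M : lobj Q) P h :
  is_lmod E -> is_dsum (ldom E) (lgr E) -> (forall r, pi r = 0 <-> J r) ->
  (forall q : Q, exists r : R, pi r = q) -> (forall x, ldom E x) ->
  morph M P (fshriek J pi E) h -> morph (pullb pi M) P E h.
Proof.
move=> HE Hds Hker surj Eall [Hd Ha Hact Hg]; split => //=.
- move=> a x Px; rewrite Hact //=; apply: lact_pi => //; first exact: Hd.
  by rewrite sec_spec.
- by move=> n x Px Gx; have [] := Hg n x Px Gx.
Qed.

Lemma part2 (R Q : pzRingType) (Rg : int -> R -> Prop) (J : R -> Prop)
  (pi : {rmorphism R -> Q}) (E : lobj R) :
  is_SG_ring Rg -> SG_ideal Rg J ->
  (forall q : Q, exists r : R, pi r = q) ->
  (forall r : R, pi r = 0 <-> J r) ->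
  (forall x, ldom E x) -> is_LSG Rg E -> T_closed Rg E ->
  T_closed (quot_gr Rg pi) (fshriek J pi E).
Proof.
move=> [RDs _ _] HJ surj Hker Eall [[HE Hds HSG] HLSG] ET.
move=> M Mall ML N SN TN g Hg.
have ML' := pullb_LSG ML.
have SN' : SG_submod (pullb pi M) N.
  case: SN => H1 H2 H3 H4 H5; split => //= a x Nx; exact: H4.
have TN' : quot_torsion Rg (pullb pi M) N.
  move=> x Mx; have [t [n Ht]] := TN x Mx; exists t, n => a Ha /=; apply: Ht.
  exact: (idpow_pi RDs HJ surj Hker).
have Hg' := morph_conv HE Hds Hker surj Eall Hg.
have [[h [Hh Hhg]] Huniq] := ET (pullb pi M) Mall ML' N SN' TN' g Hg'.
split; last first.
  move=> h1 h2 H1 H2 E1 E2 x Mx; apply: (Huniq h1 h2) => //.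
  - exact: (morph_conv HE Hds Hker surj Eall H1).
  - exact: (morph_conv HE Hds Hker surj Eall H2).
exists h; split => //.
have [Hhd Hha0 Hhact0 Hhg'] := Hh.
have Hha : forall x y, h (x + y) = h x + h y by move=> x y; exact: (Hha0 x y (Mall x) (Mall y)).
have Hhact : forall a x, h (lact M (pi a) x) = lact E a (h x) by move=> a x; exact: (Hhact0 a x (Mall x)).
have [[HM HMds _] _] := ML.
have h0 : h 0 = 0.
  by apply: (@addrI _ (h 0)); rewrite -Hha // !addr0.
have hN : forall x, h (- x) = - h x.
  move=> x; apply: (@addrI _ (h x)); by rewrite -Hha // !subrr h0.
have hsum : forall (s : seq int) f, h (\sum_(k <- s) f k) = \sum_(k <- s) h (f k).
  move=> s f; elim: s => [|k s IH]; first by rewrite !big_nil.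
  by rewrite !big_cons Hha // IH.
have Dh : forall x, fshriek_dom J E (h x).
  move=> x; exists (fun y => exists x, y = h x); split; last split; last by exists x.
  - split.
    + by move=> y _; apply: Eall.
    + by exists 0.
    + move=> y1 y2 [x1 ->] [x2 ->]; split; first by exists (x1 + x2); rewrite Hha.
      by move=> y [x3 ->]; exists (- x3); rewrite hN.
    + by move=> a y [x1 ->]; exists (lact M (pi a) x1); rewrite Hhact.
    + move=> y [x1 ->].
      have [_ _ Hdec _] := HMds.
      have [s [f [Hf ->]]] := Hdec x1 (Mall x1).
      exists s, (fun k => h (f k)); split; last exact: hsum.
      move=> n ns; have [_ Gf] := Hf n ns; split => //; split; last by exists (f n).
      exact: (Hhg' n (f n) (Mall _) Gf).
  - move=> j y Jj [x1 ->]; rewrite -Hhact //=.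
    have -> : pi j = 0 by apply/Hker.
    by rewrite lactr0.
split.
- by move=> x _; apply: Dh.
- by move=> x y _ _; apply: Hha.
- move=> a x Mx /=; rewrite -Hhact //=; by rewrite sec_spec.
- by move=> n x Mx Gx; split => //; apply: Hhg'.
Qed.

Theorem mainTheorem10 (R Q : pzRingType) (Rg : int -> R -> Prop) (J : R -> Prop)
  (pi : {rmorphism R -> Q}) :
  schematic Rg ->
  SG_ideal Rg J ->
  (forall q : Q, exists r : R, pi r = q) ->
  (forall r : R, pi r = 0 <-> J r) ->
  compatible Rg pi ->
  forall E : lobj R, (forall x, ldom E x) -> is_LSG Rg E -> T_closed Rg E ->
  is_LSG (quot_gr Rg pi) (fshriek J pi E) /\ T_closed (quot_gr Rg pi) (fshriek J pi E).
Proof.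
move=> [[HSG _] _ _] HJ surj Hker Hcomp E Eall EL ET; split.
- exact: part1.
- exact: part2.
Qed.
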